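(* Let $R$ be a principal ideal domain and $a\in R$ with $Ra\neq 0$. Then the left ideal $Ra$ is extremely prime if and only if $a$ is irreducible and invariant.
   Context: A principal ideal domain (PID) is a (not necessarily commutative) domain in which every left ideal and every right ideal is principal. A left ideal $\mathfrak{p}$ is extremely prime if $\mathfrak{p}\neq R$ and for $a,b\in R$, $ab\in\mathfrak{p}$ implies $a\in\mathfrak{p}$ or $b\in\mathfrak{p}$. A non-unit $a$ is irreducible if $a=bc$ implies $b$ or $c$ is a unit. A nonzero $a$ is invariant if $Ra=aR$. *)

(* Defs.v *)
From mathcomp Require Import all_boot all_algebra.
Set Implicit Arguments. Unset Strict Implicit. Unset Printing Implicit Defensive.
Import GRing.Theory.
Local Open Scope ring_scope.

Section Defs.
Variable R : nzRingType.

Definition is_unit (a : R) : Prop := exists b : R, a * b = 1 /\ b * a = 1.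

Definition is_domain : Prop := forall x y : R, x * y = 0 -> x = 0 \/ y = 0.

Definition left_ideal (I : R -> Prop) : Prop :=
  [/\ I 0, (forall x y, I x -> I y -> I (x + y)) & (forall r x, I x -> I (r * x))].

Definition right_ideal (I : R -> Prop) : Prop :=
  [/\ I 0, (forall x y, I x -> I y -> I (x + y)) & (forall r x, I x -> I (x * r))].

Definition lprincipal (a : R) : R -> Prop := fun x => exists r, x = r * a.
Definition rprincipal (a : R) : R -> Prop := fun x => exists r, x = a * r.

Definition PID : Prop :=
  [/\ is_domain,
      (forall I, left_ideal I -> exists a, forall x, I x <-> lprincipal a x)
    & (forall I, right_ideal I -> exists a, forall x, I x <-> rprincipal a x)].

Definition extremely_prime (p : R -> Prop) : Prop :=
  [/\ left_ideal p, (exists x, ~ p x)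
    & (forall a b, p (a * b) -> p a \/ p b)].

Definition irreducible_elt (a : R) : Prop :=
  ~ is_unit a /\ (forall b c, a = b * c -> is_unit b \/ is_unit c).

Definition invariant_elt (a : R) : Prop :=
  a <> 0 /\ (forall x, lprincipal a x <-> rprincipal a x).

End Defs.

(* Main.v *)
Require Import Defs.
From mathcomp Require Import all_boot all_algebra.
From Stdlib Require Import ClassicalEpsilon Classical.
Local Open Scope ring_scope.
Import GRing.Theory.
Set Implicit Arguments. Unset Strict Implicit.

Section Aux.
Variable R : nzRingType.
Hypothesis hD : is_domain R.

Lemma canc_r (x y c : R) : c <> 0 -> x * c = y * c -> x = y.
Proof.
move=> Hc E; apply/eqP; rewrite -subr_eq0; apply/eqP.
by case: (@hD (x - y) c) => //; rewrite mulrBl E subrr.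
Qed.

Lemma canc_l (x y c : R) : c <> 0 -> c * x = c * y -> x = y.
Proof.
move=> Hc E; apply/eqP; rewrite -subr_eq0; apply/eqP.
by case: (@hD c (x - y)) => //; rewrite mulrBr E subrr.
Qed.

Lemma inv_comm (x y : R) : x * y = 1 -> y * x = 1.
Proof.
move=> E.
have Hx : x <> 0 by move=> h; move: E; rewrite h mul0r => /esym/eqP; rewrite oner_eq0.
apply: (@canc_l _ _ x Hx); by rewrite mulrA E mul1r mulr1.
Qed.

Lemma racc (J : nat -> R -> Prop) : PID R -> (forall n, right_ideal (J n)) ->
  (forall n x, J n x -> J n.+1 x) -> exists N, forall x, J N.+1 x -> J N x.
Proof.
move=> [_ _ hr] hJ hmono.
have mono : forall k n x, J n x -> J (k + n)%N x.
  elim=> [//|k IH] n x Hx; rewrite addSn; exact/hmono/IH.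
pose U x := exists n, J n x.
have hU : right_ideal U.
  split.
  - exists 0%N; by case: (hJ 0%N).
  - move=> x y [n Hx] [m Hy]; exists (m + n)%N.
    case: (hJ (m + n)%N) => _ H _; apply: H; first exact: mono.
    rewrite addnC; exact: mono.
  - move=> r x [n Hx]; exists n; case: (hJ n) => _ _ H; exact: H.
have [g Hg] := hr U hU.
have [N HN] : U g by apply/Hg; exists 1; rewrite mulr1.
exists N => x Hx.
have [r ->] : rprincipal g x by apply/Hg; exists N.+1.
by case: (hJ N) => _ _ H; apply: H.
Qed.

Lemma ldcc (a : R) (K : nat -> R -> Prop) : PID R -> a <> 0 ->
  (forall n, left_ideal (K n)) -> (forall n, K n a) ->
  (forall n x, K n.+1 x -> K n x) -> exists N, forall x, K N x -> K N.+1 x.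
Proof.
move=> hP ha hK hKa hdesc.
have hl := hP; case: hl => _ hl _.
have H : forall n, exists b, forall x, K n x <-> lprincipal b x.
  move=> n; exact: hl.
pose b n := proj1_sig (constructive_indefinite_description _ (H n)).
have Hb : forall n x, K n x <-> lprincipal (b n) x.
  move=> n; exact: (proj2_sig (constructive_indefinite_description _ (H n))).
have Hda : forall n, exists d, a = d * b n.
  move=> n; have [d Hd] := (Hb n a).1 (hKa n); by exists d.
have bnz : forall n, b n <> 0.
  move=> n h; have [d Hd] := Hda n; apply: ha; by rewrite Hd h mulr0.
pose J n x := exists d s, a = d * b n /\ x = d * s.
have hJ : forall n, right_ideal (J n).
  move=> n; split.
  - have [d Hd] := Hda n; exists d, 0; by rewrite mulr0.
  - move=> x y [d [s [Hd ->]]] [d' [s' [Hd' ->]]].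
    have E : d = d' by apply: (canc_r (bnz n)); rewrite -Hd -Hd'.
    exists d, (s + s'); by rewrite mulrDr E.
  - move=> r x [d [s [Hd ->]]]; exists d, (s * r); by rewrite mulrA.
have hJm : forall n x, J n x -> J n.+1 x.
  move=> n x [d [s [Hd ->]]].
  have [c Hc] : lprincipal (b n) (b n.+1).
    apply/Hb/hdesc/Hb; exists 1; by rewrite mul1r.
  have [d' Hd'] := Hda n.+1.
  have E : d = d' * c.
    apply: (canc_r (bnz n)); by rewrite -Hd -mulrA -Hc -Hd'.
  exists d', (c * s); by rewrite E mulrA.
have [N HN] := racc hP hJ hJm.
exists N => x Hx.
have [d' Hd'] := Hda N.+1.
have [d [e [Hd He]]] : J N d' by apply: HN; exists d', 1; rewrite mulr1.
have [c Hc] : lprincipal (b N) (b N.+1).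
  apply/Hb/hdesc/Hb; exists 1; by rewrite mul1r.
have E : d = d' * c.
  apply: (canc_r (bnz N)); by rewrite -Hd -mulrA -Hc -Hd'.
have d'nz : d' <> 0 by move=> h; apply: ha; rewrite Hd' h mul0r.
have ce : c * e = 1.
  apply: (canc_l d'nz); by rewrite mulr1 mulrA -E -He.
have ec := inv_comm ce.
have [t ->] := (Hb N x).1 Hx.
apply/Hb; exists (t * e); by rewrite Hc !mulrA -(mulrA t e c) ec mulr1.
Qed.

End Aux.

Lemma lp_left (R : nzRingType) (a : R) : left_ideal (lprincipal a).
Proof.
split.
- exists 0; by rewrite mul0r.
- move=> x y [r ->] [s ->]; exists (r + s); by rewrite mulrDl.
- move=> r x [s ->]; exists (r * s); by rewrite mulrA.
Qed.

Lemma one_notin (R : nzRingType) (a : R) :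
  extremely_prime (lprincipal a) -> ~ lprincipal a 1.
Proof.
move=> [_ [x Hx] _] [r Hr]; apply: Hx; exists (x * r); by rewrite -mulrA -Hr mulr1.
Qed.

Lemma pow_notin (R : nzRingType) (a g : R) :
  extremely_prime (lprincipal a) -> ~ lprincipal a g ->
  forall n, ~ lprincipal a (g ^+ n).
Proof.
move=> ep Hg; elim=> [|n IH]; first by rewrite expr0; exact: one_notin.
rewrite exprSr => H; case: ep => _ _ ep3; by case: (ep3 _ _ H).
Qed.

Lemma maxl (R : nzRingType) (hR : PID R) (a : R) (ha : a <> 0) :
  extremely_prime (lprincipal a) ->
  forall g, ~ lprincipal a g -> exists y, lprincipal a (1 - y * g).
Proof.
move=> ep g Hg.
have hD : is_domain R by case: hR.
pose K n x := exists y p, lprincipal a p /\ x = y * g ^+ n + p.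
have P0 : lprincipal a 0 by exists 0; rewrite mul0r.
have hK : forall n, left_ideal (K n).
  move=> n; split.
  - exists 0, 0; split => //; by rewrite mul0r addr0.
  - move=> x z [y [p [Hp ->]]] [y' [p' [Hp' ->]]]; exists (y + y'), (p + p'); split.
    + case: (lp_left a) => _ H _; exact: H.
    + by rewrite mulrDl addrACA.
  - move=> r x [y [p [Hp ->]]]; exists (r * y), (r * p); split.
    + case: (lp_left a) => _ _ H; exact: H.
    + by rewrite mulrDr mulrA.
have hKa : forall n, K n a.
  move=> n; exists 0, a; split; first by exists 1; rewrite mul1r.
  by rewrite mul0r add0r.
have hdesc : forall n x, K n.+1 x -> K n x.
  move=> n x [y [p [Hp ->]]]; exists (y * g), p; split => //; by rewrite exprS mulrA.
have [N HN] := ldcc hD hR ha hK hKa hdesc.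
have [y [p [Hp E]]] : K N.+1 (g ^+ N).
  apply: HN; exists 1, 0; split => //; by rewrite mul1r addr0.
exists y.
have H : lprincipal a ((1 - y * g) * g ^+ N).
  rewrite mulrBl mul1r -mulrA -exprS.
  suff -> : g ^+ N - y * g ^+ N.+1 = p by [].
  by rewrite {1}E addrAC subrr add0r.
have [_ _ ep3] := ep; case: (ep3 _ _ H) => // H'.
by case: (pow_notin ep Hg H').
Qed.

Theorem proposition3p2 (R : nzRingType) (hR : PID R) (a : R)
    (hRa : ~ (forall x : R, lprincipal a x <-> x = 0)) :
  extremely_prime (lprincipal a) <-> (irreducible_elt a /\ invariant_elt a).
Proof.
have hR' := hR; case: hR' => hD hl hr.
have ha : a <> 0.
  move=> a0; apply: hRa => x; split; first by move=> [r ->]; rewrite a0 mulr0.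
  move->; exists 0; by rewrite mul0r.
split.
- move=> ep; have ep' := ep; case: ep' => _ _ ep3.
  have tws : forall r, lprincipal a (a * r).
    move=> r; case: (classic (lprincipal a (a * r))) => // Hn.
    have [y [q Hq]] := maxl hR ha ep Hn.
    have Hr : ~ lprincipal a r.
      move=> [s Hs]; apply: Hn; exists (a * s); by rewrite Hs mulrA.
    have H1 : lprincipal a ((1 - r * y * a) * r).
      exists (r * q).
      have -> : r * q * a = r * (q * a) by rewrite mulrA.
      by rewrite -Hq mulrBr mulr1 mulrBl mul1r !mulrA.
    case: (ep3 _ _ H1) => // H2.
    exfalso; apply: (one_notin ep).
    have -> : (1 : R) = (1 - r * y * a) + r * y * a by rewrite subrK.
    case: (lp_left a) => _ H _; apply: H => //; by exists (r * y).
  have hri : right_ideal (lprincipal a).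
    split.
    - exists 0; by rewrite mul0r.
    - move=> x y [r ->] [s ->]; exists (r + s); by rewrite mulrDl.
    - move=> s x [r ->]; have [u Hu] := tws s; exists (r * u).
      by rewrite -mulrA Hu mulrA.
  have [c Hc] := hr _ hri.
  have [e He] : lprincipal a c by apply/Hc; exists 1; rewrite mulr1.
  have [u Hu] : rprincipal c a by apply/Hc; exists 1; rewrite mul1r.
  have [s Hs] := tws u.
  have es : e * s = 1.
    apply: (canc_r hD ha); by rewrite mul1r -mulrA -Hs mulrA -He -Hu.
  have enz : e <> 0 by move=> h; move: es; rewrite h mul0r => /esym/eqP; rewrite oner_eq0.
  have inv : forall x, lprincipal a x <-> rprincipal a x.
    move=> x; split.
    + move=> [r ->].
      have [v Hv] : rprincipal c (e * (r * a)).
        apply/Hc; exists (e * r); by rewrite mulrA.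
      exists v; apply: (canc_l hD enz); by rewrite Hv He mulrA.
    + move=> [r ->]; exact: tws.
  split; last by split.
  split.
  + move=> [b [ab ba]]; apply: (one_notin ep); exists b; by rewrite ba.
  + move=> b c' Hbc.
    have : lprincipal a (b * c') by rewrite -Hbc; exists 1; rewrite mul1r.
    case/ep3 => [[w Hw]|[w Hw]].
    * have [w' Hw'] := (inv (w * a)).1 (ex_intro _ w erefl).
      have E : w' * c' = 1.
        apply: (canc_l hD ha); by rewrite mulr1 mulrA -Hw' -Hw.
      right; exists w'; split => //; exact: inv_comm.
    * have E : b * w = 1.
        apply: (canc_r hD ha); by rewrite mul1r -mulrA -Hw.
      left; exists w; split => //; exact: inv_comm.
- move=> [[nu irr] [anz inv]]; split.
  + exact: lp_left.
  + exists 1 => -[r Hr]; apply: nu; exists r; split; last by rewrite -Hr.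
    apply: (inv_comm hD); by rewrite -Hr.
  + move=> b c Hbc.
    pose Q y := lprincipal a (y * c).
    have hQ : left_ideal Q.
      split.
      * rewrite /Q mul0r; exists 0; by rewrite mul0r.
      * move=> x y Hx Hy; rewrite /Q mulrDl.
        case: (lp_left a) => _ H _; exact: H.
      * move=> r x Hx; rewrite /Q -mulrA.
        case: (lp_left a) => _ _ H; exact: H.
    have [g Hg] := hl Q hQ.
    have Qa : Q a by apply/inv; exists c.
    have [u Hu] := (Hg a).1 Qa.
    case: (irr u g Hu) => [[u' [uu' u'u]]|[g' [gg' g'g]]].
    * have [t Ht] := (Hg b).1 Hbc.
      left; exists (t * u').
      by rewrite Hu !mulrA -(mulrA t u' u) u'u mulr1.
    * have : Q 1 by apply/Hg; exists g'; rewrite g'g.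
      rewrite /Q mul1r; by right.
Qed.
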